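(* Let $F=\{T_1,\dots,T_m\}$ be a random forest on $X_n$ and $\vec x\in\{0,1\}^n$ an instance with $F(\vec x)=1$. Let $y_1,\dots,y_m$ be fresh variables, and consider the Partial MaxSAT instance $(C_{\mathrm{soft}},C_{\mathrm{hard}})$ with $$C_{\mathrm{soft}}=\{\overline x_i: x_i\in t_{\vec x}\}\cup\{x_i:\overline x_i\in t_{\vec x}\}\quad(\text{unit clauses}),$$ $$C_{\mathrm{hard}}=\{(\overline y_i\vee c_{\mid\vec x}): i\in[m],\ c\in\mathrm{CNF}(T_i)\}\cup \mathrm{CNF}\Big(\sum_{i=1}^m y_i>\frac m2\Big),$$ where $c_{\mid\vec x}=c\cap t_{\vec x}$ is the clause consisting of those literals of $c$ that belong to $t_{\vec x}$, and $\mathrm{CNF}(\sum_{i=1}^m y_i>\frac m2)$ is a CNF encoding of the cardinality constraint $\sum_i y_i>\frac m2$ (over $y_1,\dots,y_m$ and possibly further fresh auxiliary variables, whose projection onto $y_1,\dots,y_m$ is equivalent to the constraint). If $\vec z^*$ is an optimal solution of $(C_{\mathrm{soft}},C_{\mathrm{hard}})$, then the term $t_{\vec x}\cap t_{\vec z^*}$ (the set of literals of $t_{\vec x}$ that are true under $\vec z^*$) is a minimal majoritary reason for $\vec x$ given $F$.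
   Context: A (Boolean) decision tree on $X_n=\{x_1,\dots,x_n\}$ is a binary tree whose internal nodes are labeled by variables of $X_n$ (each variable occurring at most once on any root-to-leaf path) and whose leaves are labeled $0$ or $1$; its value $T(\vec x)$ is the label of the leaf reached by going left (resp. right) at a node labeled $x_i$ when $x_i=0$ (resp. $1$). $\mathrm{CNF}(T)$ is the CNF formula whose clauses are the negations of the terms describing the root-to-leaf paths of $T$ ending in a $0$-leaf; it is equivalent to $T$. A random forest $F=\{T_1,\dots,T_m\}$ has value $F(\vec x)=1$ iff $\frac1m\sum_i T_i(\vec x)>\frac12$. $[m]=\{1,\dots,m\}$. For an assignment $\vec z$, $t_{\vec z}=\bigwedge_i x_i^{z_i}$ with $x_i^1=x_i$, $x_i^0=\overline x_i$ (terms are treated as sets of literals). A term $t$ covers $\vec x$ if $t\subseteq t_{\vec x}$; an implicant of a Boolean function $f$ is a term $t$ with $f(\vec z)=1$ for all $\vec z$ covered by $t$. A majoritary reason for $\vec x$ given $F$ (with $F(\vec x)=1$) is a term $t$ covering $\vec x$ that is an implicant of at least $\lfloor m/2\rfloor+1$ trees $T_i$, and such that for every $l\in t$, $t\setminus\{l\}$ is not; a minimal majoritary reason is one of minimum size. A Partial MaxSAT instance $(C_{\mathrm{soft}},C_{\mathrm{hard}})$ consists of two finite sets of clauses; an optimal solution is an assignment satisfying all clauses of $C_{\mathrm{hard}}$ and maximizing the number of satisfied clauses of $C_{\mathrm{soft}}$. *)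

(* Defs.v *)
From mathcomp Require Import all_boot.
Set Implicit Arguments. Unset Strict Implicit. Unset Printing Implicit Defensive.

(* Variables x_1..x_n are indexed by 'I_n.  A literal (i, b) stands for
   x_i^b: (i, true) is x_i and (i, false) is the negation of x_i. *)
Definition lit (n : nat) := ('I_n * bool)%type.
Definition neg_lit n (l : lit n) : lit n := (l.1, ~~ l.2).

Inductive dtree (n : nat) : Type :=
| Leaf of bool
| Node of 'I_n & dtree n & dtree n.
Arguments Leaf {n}.

Fixpoint wf_aux n (seen : seq 'I_n) (T : dtree n) : bool :=
  match T with
  | Leaf _ => true
  | Node i l r => (i \notin seen) && wf_aux (i :: seen) l && wf_aux (i :: seen) r
  end.
Definition wf_tree n (T : dtree n) := wf_aux [::] T.

Fixpoint deval n (T : dtree n) (z : 'I_n -> bool) : bool :=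
  match T with
  | Leaf b => b
  | Node i l r => if z i then deval r z else deval l z
  end.

Fixpoint zero_paths n (T : dtree n) : seq (seq (lit n)) :=
  match T with
  | Leaf b => if b then [::] else [:: [::]]
  | Node i l r => map (cons (i, false)) (zero_paths l)
                  ++ map (cons (i, true)) (zero_paths r)
  end.

(* CNF(T): clauses (disjunctions of literals) = negations of the 0-path terms *)
Definition tcnf n (T : dtree n) : seq (seq (lit n)) :=
  map (map (@neg_lit n)) (zero_paths T).

(* random forest F = {T_1,...,T_m}: F(x)=1 iff (1/m) sum T_i(x) > 1/2 *)
Definition rf_eval n m (F : 'I_m -> dtree n) (z : 'I_n -> bool) : bool :=
  m < 2 * #|[set i | deval (F i) z]|.

Definition tvec n (z : 'I_n -> bool) : {set lit n} := [set (i, z i) | i : 'I_n].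
Definition covers n (t : {set lit n}) (z : 'I_n -> bool) := t \subset tvec z.
Definition implicant n (f : ('I_n -> bool) -> bool) (t : {set lit n}) :=
  forall z : 'I_n -> bool, covers t z -> f z.

Definition maj_implicant n m (F : 'I_m -> dtree n) (t : {set lit n}) :=
  exists S : {set 'I_m}, m./2.+1 <= #|S| /\ forall i, i \in S -> implicant (deval (F i)) t.

Definition majoritary_reason n m (F : 'I_m -> dtree n) (x : 'I_n -> bool) (t : {set lit n}) :=
  [/\ covers t x, maj_implicant F t &
      forall l, l \in t -> ~ maj_implicant F (t :\ l)].

Definition minimal_majoritary_reason n m (F : 'I_m -> dtree n) (x : 'I_n -> bool)
    (t : {set lit n}) :=
  majoritary_reason F x t /\
  forall t', majoritary_reason F x t' -> #|t| <= #|t'|.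

Definition clause (V : Type) := seq (V * bool).
Definition sat_clause V (z : V -> bool) (c : clause V) : bool :=
  has (fun l => z l.1 == l.2) c.
Definition sat_all V (z : V -> bool) (C : seq (clause V)) : bool :=
  all (sat_clause z) C.
Definition optimal_solution V (Csoft Chard : seq (clause V)) (z : V -> bool) :=
  sat_all z Chard /\
  forall z' : V -> bool, sat_all z' Chard ->
    count (sat_clause z') Csoft <= count (sat_clause z) Csoft.

(* MaxSAT variables: x_1..x_n (inl), y_1..y_m (inr (inl)), auxiliary (inr (inr)) *)
Definition mvar (n m : nat) (A : Type) := ('I_n + ('I_m + A))%type.

Definition Csoft n m (A : Type) (x : 'I_n -> bool) : seq (clause (mvar n m A)) :=
  [seq [:: (inl i, ~~ x i)] | i <- enum 'I_n].

Definition restrict n (x : 'I_n -> bool) (c : seq (lit n)) : seq (lit n) :=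
  [seq l <- c | l \in tvec x].

Definition Chard n m (A : Type) (F : 'I_m -> dtree n) (x : 'I_n -> bool)
    (Ccard : seq (clause ('I_m + A))) : seq (clause (mvar n m A)) :=
  flatten [seq [seq (inr (inl i), false) :: [seq (inl l.1, l.2) | l <- restrict x c]
               | c <- tcnf (F i)] | i <- enum 'I_m]
  ++ [seq [seq (inr l.1, l.2) | l <- c] | c <- Ccard].

Definition card_encoding m (A : Type) (Ccard : seq (clause ('I_m + A))) :=
  forall y : 'I_m -> bool,
    (exists a : A -> bool,
        sat_all (fun v => match v with inl j => y j | inr b => a b end) Ccard)
    <-> m < 2 * #|[set i | y i]|.

(* Main.v *)
Require Import Defs.
From mathcomp Require Import all_boot.
From mathcomp Require Import zify.
Set Implicit Arguments. Unset Strict Implicit.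

Lemma cnt n (P : pred 'I_n) : #|[set i | P i]| = count P (enum 'I_n).
Proof. rewrite cardsE cardE -size_filter /enum_mem -filter_predI. congr size. apply: eq_filter => i.
by rewrite /predI /= andbT. Qed.

Definition lsat {n} (z : 'I_n -> bool) (l : lit n) := z l.1 == l.2.

Lemma mem_tvec n (w : 'I_n -> bool) j b : ((j, b) \in tvec w) = (b == w j).
Proof.
apply/imsetP/eqP => [[i _ [-> ->]] // | ->]; by exists j.
Qed.

Lemma zp_sound n (T : dtree n) (z : 'I_n -> bool) p :
  p \in zero_paths T -> all (lsat z) p -> deval T z = false.
Proof.
elim: T p => [b|i l IHl r IHr] p /=.
- by case: b => //; rewrite in_nil.
- rewrite mem_cat => /orP [] /mapP [q Hq ->] /= /andP [Hi Hq'];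
  move: Hi; rewrite /lsat => /eqP /= Hi; rewrite Hi; [exact: IHl Hq Hq' | exact: IHr Hq Hq'].
Qed.

Lemma zp_complete n (T : dtree n) (z : 'I_n -> bool) :
  deval T z = false -> exists2 p, p \in zero_paths T & all (lsat z) p.
Proof.
elim: T => [b|i l IHl r IHr] /=.
- by move=> ->; exists [::]; rewrite ?inE.
- case Hz: (z i) => H.
  + have [p Hp Hs] := IHr H; exists ((i, true) :: p).
    * by rewrite mem_cat; apply/orP; right; apply/map_f.
    * by rewrite /= /lsat /= Hz Hs.
  + have [p Hp Hs] := IHl H; exists ((i, false) :: p).
    * by rewrite mem_cat; apply/orP; left; apply/map_f.
    * by rewrite /= /lsat /= Hz Hs.
Qed.

Lemma zp_wf n seen (T : dtree n) p :
  wf_aux seen T -> p \in zero_paths T ->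
  uniq (map fst p) && all (fun l => l.1 \notin seen) p.
Proof.
elim: T seen p => [b|i l IHl r IHr] seen p /=.
- by case: b => _; rewrite ?inE // => /eqP ->.
- case/andP => [/andP [Hi Hl] Hr]; rewrite mem_cat => /orP [] /mapP [q Hq ->] /=.
  + have /andP [Hu Ha] := IHl _ _ Hl Hq.
    have H1 : i \notin map fst q.
      apply/mapP => [[l0 Hl0 E]]; move/allP: Ha => /(_ _ Hl0).
      by rewrite inE -E eqxx.
    have H2 : all (fun l => l.1 \notin seen) q.
      apply/allP => l0 Hl0; move/allP: Ha => /(_ _ Hl0).
      by rewrite inE negb_or => /andP [].
    by rewrite H1 Hu Hi H2.
  + have /andP [Hu Ha] := IHr _ _ Hr Hq.
    have H1 : i \notin map fst q.
      apply/mapP => [[l0 Hl0 E]]; move/allP: Ha => /(_ _ Hl0).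
      by rewrite inE -E eqxx.
    have H2 : all (fun l => l.1 \notin seen) q.
      apply/allP => l0 Hl0; move/allP: Ha => /(_ _ Hl0).
      by rewrite inE negb_or => /andP [].
    by rewrite H1 Hu Hi H2.
Qed.

Lemma uniq_bit n (p : seq (lit n)) j b b' :
  uniq (map fst p) -> (j, b) \in p -> (j, b') \in p -> b = b'.
Proof.
elim: p => //= [[j0 b0] p IH] /andP [Hn Hu]; rewrite !inE.
case/orP => [/eqP [E1 E2] | H1]; case/orP => [/eqP [E3 E4] | H2].
- by rewrite E2 E4.
- by subst; rewrite (map_f fst H2) in Hn.
- by subst; rewrite (map_f fst H1) in Hn.
- exact: IH.
Qed.

Lemma clauses_of_imp n (T : dtree n) (x : 'I_n -> bool) (t : {set lit n}) :
  wf_tree T -> t \subset tvec x -> implicant (deval T) t ->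
  forall c, c \in tcnf T -> has (mem t) c.
Proof.
move=> wf sub imp c /mapP [p Hp ->].
apply/negPn/negP => Hn; rewrite has_map in Hn.
have /andP [Hu _] := zp_wf wf Hp.
pose z := fun j => if (j, ~~ x j) \in p then ~~ x j else x j.
have Hcov : covers t z.
  apply/subsetP => [[j b]] Hjb.
  have /eqP Hb : b == x j by rewrite -mem_tvec (subsetP sub _ Hjb).
  rewrite mem_tvec /z; case: ifP => H.
  - exfalso; move/hasP: Hn; apply; exists (j, ~~ x j) => //.
    by rewrite /= /neg_lit /= negbK -Hb.
  - by rewrite Hb.
have := imp z Hcov.
rewrite (@zp_sound _ _ z p Hp) //.
apply/allP => [[j b]] Hjb; rewrite /lsat /z /=; case: ifP => H.
- by rewrite (uniq_bit Hu Hjb H).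
- have : b != ~~ x j by apply/eqP => Hb; rewrite -Hb Hjb in H.
  by case: b {Hjb}; case: (x j).
Qed.

Lemma imp_of_clauses n (T : dtree n) (t : {set lit n}) :
  (forall c, c \in tcnf T -> has (mem t) c) -> implicant (deval T) t.
Proof.
move=> H z cov; apply/negPn/negP => /negbTE Hf.
have [p Hp Hs] := zp_complete Hf.
have := H _ (map_f (map (@neg_lit n)) Hp).
rewrite has_map => /hasP [[j b] Hl Hlt].
have := subsetP cov _ Hlt; rewrite /neg_lit /= mem_tvec.
move/allP: Hs => /(_ _ Hl); rewrite /lsat /= => /eqP E.
by rewrite E; case: b Hl Hlt E.
Qed.

Lemma soft_count n m (A : Type) (x : 'I_n -> bool) (z : mvar n m A -> bool) :
  count (sat_clause z) (Csoft m A x) + #|tvec x :&: tvec (fun i => z (inl i))| = n.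
Proof.
have -> : tvec x :&: tvec (fun i => z (inl i)) =
          (fun i => (i, x i)) @: [set i | z (inl i) == x i].
  apply/setP => [[j b]]; rewrite in_setI !mem_tvec.
  apply/andP/imsetP => [[/eqP -> /eqP Hw] | [i]].
  - by exists j; rewrite ?inE // Hw.
  - by rewrite inE => /eqP Hi [-> ->]; rewrite eqxx Hi.
rewrite card_imset; last by move=> i1 i2 [].
rewrite cnt /Csoft count_map addnC.
transitivity (size (enum 'I_n)); last exact: size_enum_ord.
rewrite -(count_predC (fun i => z (inl i) == x i)).
congr (_ + _); apply: eq_count => i /=.
by rewrite /sat_clause /= orbF; case: (z _); case: (x i).
Qed.

Lemma has_filterE (T : Type) (a p : pred T) (s : seq T) :
  has a (filter p s) = has (fun y => p y && a y) s.
Proof. by elim: s => //= y s IH; case: (p y) => /=; rewrite IH. Qed.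

Lemma hard_sat n m (A : Type) (F : 'I_m -> dtree n) x Ccard (z : mvar n m A -> bool) :
  sat_all z (Chard F x Ccard) =
  all (fun i => z (inr (inl i)) ==>
        all (has (mem (tvec x :&: tvec (fun j => z (inl j))))) (tcnf (F i))) (enum 'I_m)
  && sat_all (fun v => match v with inl j => z (inr (inl j)) | inr b => z (inr (inr b)) end) Ccard.
Proof.
rewrite /sat_all /Chard all_cat; congr andb.
- elim: (enum 'I_m) => //= i s IH; rewrite all_cat IH; congr andb.
  rewrite all_map.
  transitivity (all (fun c => ~~ z (inr (inl i)) ||
                   has (mem (tvec x :&: tvec (fun j => z (inl j)))) c) (tcnf (F i))).
  + apply: eq_all => c; rewrite /sat_clause /= has_map /restrict has_filterE.
    congr orb; first by case: (z _).
    apply: eq_has => [[j b]] /=; rewrite in_setI !mem_tvec.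
    by rewrite (eq_sym (z _)).
  + case: (z (inr (inl i))) => //=.
    by apply/allP => c _.
- rewrite all_map; apply: eq_all => c; rewrite /= /sat_clause has_map.
  by apply: eq_has => -[[v|v] b].
Qed.

Unset Implicit Arguments. Set Strict Implicit.

Theorem proposition8 (n m : nat) (F : 'I_m -> dtree n) (x : 'I_n -> bool)
    (A : finType) (Ccard : seq (clause ('I_m + A))) (z : mvar n m A -> bool) :
  (forall i, wf_tree (F i)) ->
  rf_eval F x ->
  card_encoding Ccard ->
  optimal_solution (Csoft m A x) (Chard F x Ccard) z ->
  minimal_majoritary_reason F x (tvec x :&: tvec (fun i => z (inl i))).
Proof.
move=> Hwf Hx Hcard [Hhard Hopt].
set t := tvec x :&: tvec (fun i => z (inl i)).
have sub_t : t \subset tvec x := subsetIl _ _.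
move: (Hhard); rewrite hard_sat => /andP [Hh Hc].
set S := [set i | z (inr (inl i))].
have HS : m < 2 * #|S|.
  apply: (Hcard (fun i => z (inr (inl i)))).1.
  by exists (fun b => z (inr (inr b))).
have Hmaj : maj_implicant F t.
  exists S; split; first by move: HS; move: #|S| => k; lia.
  move=> i; rewrite inE => Hi; apply: imp_of_clauses => c Hc'.
  move/allP: Hh => /(_ i (mem_enum _ i)); rewrite Hi /= => /allP; exact.
have Hmin : forall t', covers t' x -> maj_implicant F t' -> #|t| <= #|t'|.
  move=> t' Hcov [S' [HS' Himp']].
  have [a Ha] : exists a : A -> bool,
      sat_all (fun v => match v with inl j => j \in S' | inr b => a b end) Ccard.
    apply: (Hcard (fun i => i \in S')).2.
    rewrite (_ : [set i | i \in S'] = S'); first by move: HS'; move: #|S'| => k; lia.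
    by apply/setP => i; rewrite inE.
  pose z' : mvar n m A -> bool := fun v => match v with
     | inl j => if (j, x j) \in t' then x j else ~~ x j
     | inr (inl i) => i \in S'
     | inr (inr b) => a b end.
  have E : forall j b, (j, b) \in t' -> b = x j.
    by move=> j b H; apply/eqP; rewrite -mem_tvec (subsetP Hcov _ H).
  have Ht' : tvec x :&: tvec (fun j => z' (inl j)) = t'.
    apply/setP => [[j b]]; rewrite in_setI !mem_tvec /z' /=.
    case Hb: (b == x j).
    - move/eqP: Hb => ->; rewrite /=.
      case: ifP => H; rewrite ?eqxx //; by case: (x j).
    - case Hin: ((j, b) \in t') => //.
      by rewrite (E _ _ Hin) eqxx in Hb.
  have Hhard' : sat_all z' (Chard F x Ccard).
    rewrite hard_sat Ht'; apply/andP; split.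
    - apply/allP => i _ /=; apply/implyP => Hi; apply/allP => c Hc'.
      exact: clauses_of_imp (Hwf i) Hcov (Himp' i Hi) c Hc'.
    - exact: Ha.
  have := Hopt z' Hhard'.
  have := soft_count x z'; have := soft_count x z.
  rewrite Ht' -/t; lia.
split; last by move=> t' [Hc' Hm' _]; exact: Hmin.
split => // l Hl Hm'.
have := Hmin (t :\ l) (subset_trans (subD1set t l) sub_t) Hm'.
rewrite (cardsD1 l t) Hl; lia.
Qed.
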